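(* Let $c>2$ be a constant. For all sufficiently large $n$ and all $p$ with $\frac{c\log n}{n}\le p\le 1$, we have $R(n,p)\ge 1-\frac{1.5}{n}$.
   Context: $\mathcal{G}_{n,p}$ denotes the random directed graph on $n$ vertices in which each ordered pair of distinct vertices is an edge independently with probability $p$. Fix one vertex as the target. $R(n,p)$ is the probability that every vertex of a random graph from $\mathcal{G}_{n,p}$ has a directed path to the target vertex. $\log$ is the natural logarithm. *)

(* Defs.v *)
From HB Require Import structures.
From mathcomp Require Import all_boot all_order all_algebra.
From mathcomp Require Import reals exp.
Set Implicit Arguments. Unset Strict Implicit. Unset Printing Implicit Defensive.
Import Order.TTheory GRing.Theory Num.Theory.
Local Open Scope ring_scope.

(* A directed graph on vertex set 'I_n is encoded by its adjacency function
   g : {ffun 'I_n * 'I_n -> bool}; (i,j) is an edge iff g (i,j). Only loopless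
   graphs (g (i,i) = false) are considered. *)
Definition loopless (n : nat) (g : {ffun 'I_n * 'I_n -> bool}) : bool :=
  [forall i : 'I_n, ~~ g (i, i)].

Definition edge_rel (n : nat) (g : {ffun 'I_n * 'I_n -> bool}) : rel 'I_n :=
  fun x y => g (x, y).

(* The target vertex is vertex 0. Every vertex has a directed path
   (possibly of length 0) to the target. *)
Definition all_reach_target (n : nat) (g : {ffun 'I_n * 'I_n -> bool}) : bool :=
  [forall v : 'I_n, exists t : 'I_n, (val t == 0%N) && connect (edge_rel g) v t].

(* Probability of the graph g under G_{n,p}: each ordered pair of distinct
   vertices is an edge independently with probability p. *)
Definition gnp_weight (R : realType) (n : nat) (p : R)
    (g : {ffun 'I_n * 'I_n -> bool}) : R :=
  \prod_(e : 'I_n * 'I_n | e.1 != e.2) (if g e then p else 1 - p).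

Definition Rnp (R : realType) (n : nat) (p : R) : R :=
  \sum_(g : {ffun 'I_n * 'I_n -> bool} | loopless g && all_reach_target g)
     gnp_weight p g.

(* Main.v *)
Require Import Defs.
From HB Require Import structures.
From mathcomp Require Import all_boot all_order all_algebra.
From mathcomp Require Import reals exp sequences.
From mathcomp Require Import ring lra zify.
Import Order.TTheory GRing.Theory Num.Theory.
Set Implicit Arguments. Unset Strict Implicit. Unset Printing Implicit Defensive.
Local Open Scope ring_scope.

Definition Fw (R : realType) (p : R) (n : nat) (e : 'I_n * 'I_n) (b : bool) : R :=
  if e.1 != e.2 then (if b then p else 1 - p) else (if b then 0 else 1).

Definition Pw (R : realType) (p : R) (n : nat) (f : {ffun 'I_n * 'I_n -> bool}) : R :=
  \prod_e Fw p e (f e).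

Lemma sum_Pw (R : realType) (p : R) (n : nat) :
  \sum_(f : {ffun 'I_n * 'I_n -> bool}) Pw p f = 1.
Proof.
rewrite /Pw -(bigA_distr_bigA (fun e b => Fw p e b)) /=.
apply: big1 => e _; rewrite big_bool /Fw.
by case: ifP => _ /=; [rewrite addrC subrK | rewrite add0r].
Qed.

Lemma Pw_ge0 (R : realType) (p : R) (n : nat) f :
  0 <= p -> p <= 1 -> 0 <= Pw (n:=n) p f.
Proof.
move=> h0 h1; apply: prodr_ge0 => e _; rewrite /Fw.
by case: ifP => _; case: (f e) => //; rewrite subr_ge0.
Qed.

Lemma Pw_loopless (R : realType) (p : R) (n : nat) f :
  loopless f -> Pw (n:=n) p f = gnp_weight p f.
Proof.
move=> /forallP Hl; rewrite /Pw /gnp_weight (bigID (fun e : 'I_n * 'I_n => e.1 != e.2)) /=.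
rewrite [X in _ * X]big1 ?mulr1.
  by apply: eq_bigr => e He; rewrite /Fw He.
move=> [x y] /= /negPn /eqP Hxy; subst y; rewrite /Fw /= eqxx /=.
by rewrite (negbTE (Hl x)).
Qed.

Lemma Pw_notloopless (R : realType) (p : R) (n : nat) f :
  ~~ loopless f -> Pw (n:=n) p f = 0.
Proof.
move=> /forallPn [i /negPn Hi]; rewrite /Pw (bigD1 (i, i)) //= /Fw /= eqxx /= Hi.
by rewrite mul0r.
Qed.

Lemma Rnp_eq (R : realType) (p : R) (n : nat) :
  Rnp n p = \sum_(f : {ffun 'I_n * 'I_n -> bool} | all_reach_target f) Pw p f.
Proof.
rewrite /Rnp (bigID (fun f : {ffun 'I_n * 'I_n -> bool} => loopless f) (fun f => all_reach_target f)) /=.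
rewrite [X in _ = _ + X]big1 ?addr0; last first.
  by move=> f /andP [_ Hf]; rewrite Pw_notloopless.
apply: eq_big => f; first by rewrite andbC.
by move=> /andP [Hl _]; rewrite Pw_loopless.
Qed.

Lemma one_minus_Rnp (R : realType) (p : R) (n : nat) :
  1 - Rnp n p = \sum_(f : {ffun 'I_n * 'I_n -> bool} | ~~ all_reach_target f) Pw p f.
Proof.
rewrite Rnp_eq -(sum_Pw p n) (bigID (fun f : {ffun 'I_n * 'I_n -> bool} => all_reach_target f)) /=.
by rewrite addrC addrK.
Qed.

Definition closedS (n : nat) (g : {ffun 'I_n * 'I_n -> bool}) (S : {set 'I_n}) : bool :=
  [forall e : 'I_n * 'I_n, ((e.1 \in S) && (e.2 \notin S)) ==> ~~ g e].

Lemma nonreach_closed (n : nat) (g : {ffun 'I_n * 'I_n -> bool}) :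
  ~~ all_reach_target g -> exists S : {set 'I_n}, [&& (0 < #|S|)%N, (#|S| < n)%N & closedS g S].
Proof.
move=> /forallPn [v /existsPn Hv].
pose S := [set x | ~~ [exists t : 'I_n, (val t == 0%N) && connect (edge_rel g) x t]].
have n0 : (0 < n)%N by apply: leq_ltn_trans (leq0n v) (ltn_ord v).
pose t0 : 'I_n := Ordinal n0.
exists S; apply/and3P; split.
- by apply/card_gt0P; exists v; rewrite inE; apply/existsPn.
- have : (#|S| < #|[set: 'I_n]|)%N.
    apply: proper_card; rewrite properT; apply/eqP => HS.
    have : t0 \in S by rewrite HS inE.
    by rewrite inE => /existsPn /(_ t0); rewrite /t0 /= connect0.
  by rewrite cardsT card_ord.
- apply/forallP => [[x y]] /=; apply/implyP => /andP [xS yS]; apply/negP => gxy.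
  move: yS; rewrite in_set negbK => /existsP [t /andP [t0' cyt]].
  move: xS; rewrite in_set => xS.
  apply: (negP xS); apply/existsP; exists t; rewrite t0' /=.
  apply: connect_trans cyt; exact: connect1.
Qed.

Lemma closed_prob (R : realType) (p : R) (n : nat) (S : {set 'I_n}) :
  \sum_(f : {ffun 'I_n * 'I_n -> bool} | closedS f S) Pw p f = (1 - p) ^+ (#|S| * (n - #|S|)).
Proof.
pose G (e : 'I_n * 'I_n) (b : bool) : R :=
  if [&& e.1 \in S, e.2 \notin S & b] then 0 else Fw p e b.
transitivity (\sum_(f : {ffun 'I_n * 'I_n -> bool}) \prod_e G e (f e)).
  rewrite big_mkcond; apply: eq_bigr => f _; rewrite /Pw.
  case: ifP => Hc.
    apply: eq_bigr => e _; rewrite /G.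
    have := (forallP Hc) e; case: (e.1 \in S) => //=; case: (e.2 \in S) => //=.
    by move/negbTE => ->.
  move/negbT: Hc => /forallPn [e]; rewrite negb_imply negbK => /andP [/andP [H1 H2] H3].
  by rewrite (bigD1 e) //= /G H1 H2 H3 mul0r.
rewrite -(bigA_distr_bigA G) /=.
rewrite (bigID (fun e : 'I_n * 'I_n => (e.1 \in S) && (e.2 \notin S))) /=.
rewrite [X in _ * X]big1 ?mulr1; last first.
  move=> e /negbTE He; rewrite big_bool /G.
  move: He; case: (e.1 \in S) => /=; case: (e.2 \in S) => //= _; rewrite /Fw;
  by case: ifP => _ /=; [rewrite addrC subrK | rewrite add0r].
rewrite (eq_bigr (fun _ => 1 - p)); last first.
  move=> e /andP [H1 H2]; rewrite big_bool /G H1 H2 /= add0r /Fw.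
  have -> : e.1 != e.2 by apply/eqP => E; move: H2; rewrite -E H1.
  by [].
rewrite prodr_const; congr (_ ^+ _).
have -> : #|[pred e : 'I_n * 'I_n | (e.1 \in S) && (e.2 \notin S)]| = #|setX S (~: S)|.
  by apply: eq_card => e; rewrite !inE.
rewrite cardsX; congr (_ * _)%N.
have h := cardsC S; rewrite card_ord in h.
apply: (@addnI #|S|); rewrite h subnKC //; apply: leq_trans (max_card _) _; by rewrite card_ord.
Qed.

Lemma failure_bound (R : realType) (p : R) (n : nat) :
  0 <= p -> p <= 1 ->
  1 - Rnp n p <= \sum_(S : {set 'I_n} | (0 < #|S|)%N && (#|S| < n)%N) (1 - p) ^+ (#|S| * (n - #|S|)).
Proof.
move=> h0 h1.
rewrite one_minus_Rnp.
rewrite (eq_bigr (fun S => \sum_(f : {ffun 'I_n * 'I_n -> bool}) if closedS f S then Pw p f else 0)); last first.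
  by move=> S _; rewrite -closed_prob big_mkcond.
rewrite exchange_big /= big_mkcond /=.
apply: ler_sum => f _.
case: ifP => Hf.
  have [S /and3P [HS1 HS2 HS3]] := nonreach_closed Hf.
  rewrite (bigD1 S) /=; last by rewrite HS1 HS2.
  rewrite HS3 lerDl; apply: sumr_ge0 => T _; case: ifP => // _; exact: Pw_ge0.
by apply: sumr_ge0 => T _; case: ifP => // _; exact: Pw_ge0.
Qed.

Lemma sum_by_card (R : realType) (n : nat) (q : R) :
  \sum_(S : {set 'I_n} | (0 < #|S|)%N && (#|S| < n)%N) q ^+ (#|S| * (n - #|S|)) =
  \sum_(k < n.+1 | (0 < k)%N && (k < n)%N) 'C(n, k)%:R * q ^+ (k * (n - k)).
Proof.
rewrite (partition_big (fun S : {set 'I_n} => (inord #|S| : 'I_n.+1))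
                       (fun k : 'I_n.+1 => (0 < k)%N && (k < n)%N)) /=; last first.
  by move=> S /andP [h1 h2]; rewrite inordK ?h1 ?h2 // ltnS ltnW.
apply: eq_bigr => k /andP [k0 kn].
transitivity (\sum_(S in [set S : {set 'I_n} | #|S| == k]) q ^+ (k * (n - k))).
  apply: eq_big => S.
    apply/idP/idP.
      move=> /andP [/andP [h1 h2] /eqP <-]; rewrite inE inordK //.
      by rewrite ltnS ltnW.
    rewrite inE => /eqP HS; rewrite HS k0 kn /=; apply/eqP/val_inj.
    by rewrite /= inordK // HS.
  move=> /andP [/andP [h1 h2] /eqP Hk]; have e : #|S| = k by rewrite -Hk inordK //; exact: ltnW h2.
  by rewrite e.
rewrite sumr_const.
by rewrite card_draws card_ord mulr_natl.
Qed.


Lemma bin_le_exp (n k : nat) : ('C(n, k) <= n ^ k)%N.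
Proof.
apply: leq_trans (_ : n ^_ k <= n ^ k)%N.
  by rewrite -bin_ffact leq_pmulr ?fact_gt0.
elim: k => [|k IH] //.
rewrite ffactnSr expnS mulnC; apply: leq_mul => //; exact: leq_subr.
Qed.

Lemma L_term (R : realType) (c : R) (n m : nat) (p : R) :
  2 < c -> (0 < n)%N -> 4 * c <= n%:R * (c - 2) -> (1 <= m)%N -> (2 * m <= n)%N ->
  c * ln (n%:R : R) / n%:R <= p -> p <= 1 ->
  'C(n, m)%:R * (1 - p) ^+ (m * (n - m)) <=
  expR (ln (n%:R : R) * (1 - c * (n%:R - 1) / n%:R)) * expR (- ((c - 2) / 4 * ln (n%:R : R))) ^+ m.-1.
Proof.
move=> hc n0 hn m1 m2 hp hp1.
set L := ln (n%:R : R).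
have nR : 0 < (n%:R : R) by rewrite ltr0n.
have L0 : 0 <= L by apply: ln_ge0; rewrite ler1n.
have p0 : 0 <= p.
  apply: le_trans hp; apply: divr_ge0 => //; apply: mulr_ge0 => //; lra.
have mn : (m <= n)%N by lia.
have h1 : 'C(n, m)%:R <= expR (m%:R * L).
  by rewrite expRM_natl lnK ?posrE // -natrX ler_nat bin_le_exp.
have h2 : (1 - p) ^+ (m * (n - m)) <= expR ((m * (n - m))%:R * - (c * L / n%:R)).
  apply: le_trans (_ : expR (- p) ^+ (m * (n - m)) <= _).
    apply: lerXn2r; rewrite ?nnegrE ?expR_ge0 //.
      by rewrite subr_ge0.
    by have := expR_ge1Dx (- p); lra.
  by rewrite -expRM_natl ler_expR; apply: ler_wpM2l => //; rewrite lerN2.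
apply: le_trans (_ : expR (m%:R * L) * expR ((m * (n - m))%:R * - (c * L / n%:R)) <= _).
  apply: ler_pM => //; apply: exprn_ge0; lra.
rewrite -expRM_natl -!expRD ler_expR.
have em : (m.-1)%:R = (m%:R : R) - 1 by rewrite -[in RHS](prednK m1) -natr1 addrK.
rewrite natrM natrB // em.
set x := (m%:R : R); set N := (n%:R : R).
have x1 : 1 <= x by rewrite /x ler1n.
have x2 : 2 * x <= N by rewrite /x /N -(natrM R 2 m) ler_nat.
have E : L * (1 - c * (N - 1) / N) + (x - 1) * - ((c - 2) / 4 * L)
         - (x * L + x * (N - x) * - (c * L / N))
       = L * ((x - 1) * (N * (c - 2) / 4 - c) + (x - 1) * (c / 2) * (N - 2 * x)) / N.
  by field; lra.
rewrite -subr_ge0 E; apply: divr_ge0; last lra.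
apply: mulr_ge0 => //; apply: addr_ge0; apply: mulr_ge0; try lra.
apply: mulr_ge0; lra.
Qed.

Lemma K_term (R : realType) (c : R) (n k : nat) (p : R) :
  2 < c -> (0 < n)%N -> 4 * c <= n%:R * (c - 2) -> (0 < k)%N -> (k < n)%N ->
  c * ln (n%:R : R) / n%:R <= p -> p <= 1 ->
  'C(n, k)%:R * (1 - p) ^+ (k * (n - k)) <=
  expR (ln (n%:R : R) * (1 - c * (n%:R - 1) / n%:R)) *
   (expR (- ((c - 2) / 4 * ln (n%:R : R))) ^+ k.-1
    + expR (- ((c - 2) / 4 * ln (n%:R : R))) ^+ (n.-1 - k)).
Proof.
move=> hc n0 hn k0 kn hp hp1.
have y0 : forall j, 0 <= expR (- ((c - 2) / 4 * ln (n%:R : R))) ^+ j.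
  by move=> j; apply: exprn_ge0; exact: expR_ge0.
case: (leqP (2 * k) n) => hk.
  apply: le_trans (L_term hc n0 hn k0 hk hp hp1) _.
  by apply: ler_wpM2l; [exact: expR_ge0 | rewrite lerDl].
have e1 : 'C(n, k) = 'C(n, n - k) by rewrite bin_sub // ltnW.
have e2 : (k * (n - k) = (n - k) * (n - (n - k)))%N by rewrite (subKn (ltnW kn)) mulnC.
have e3 : (n.-1 - k = (n - k).-1)%N by lia.
rewrite e1 e2 e3.
have hm1 : (1 <= n - k)%N by rewrite subn_gt0.
have hm2 : (2 * (n - k) <= n)%N by lia.
apply: le_trans (L_term hc n0 hn hm1 hm2 hp hp1) _.
by apply: ler_wpM2l; [exact: expR_ge0 | rewrite lerDr].
Qed.

Lemma predsub (n i : nat) : (i < n.+1)%N -> (n.-1 - (n - i) = i.-1)%N.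
Proof. move=> *; lia. Qed.

Lemma geo_le2 (R : realType) (y : R) (M : nat) :
  0 <= y -> y * 2 <= 1 -> \sum_(i < M) y ^+ i <= 2.
Proof.
move=> y0 y2; elim: M => [|M IH]; first by rewrite big_ord0.
rewrite big_ord_recl expr0.
rewrite (eq_bigr (fun i : 'I_M => y * y ^+ i)); last by move=> i _; rewrite exprS.
rewrite -mulr_sumr.
have : y * \sum_(i < M) y ^+ i <= y * 2 by apply: ler_wpM2l.
lra.
Qed.

Lemma geo_le3 (R : realType) (y : R) (n : nat) :
  0 <= y -> y * 2 <= 1 -> \sum_(k < n.+1) y ^+ k.-1 <= 3.
Proof.
move=> y0 y2; rewrite big_ord_recl /= expr0.
have := geo_le2 n y0 y2.
rewrite (eq_bigr (fun i : 'I_n => y ^+ i)) //; lra.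
Qed.

Theorem lemma22 (R : realType) (c : R) (hc : 2 < c) :
  exists N : nat, forall n : nat, (N <= n)%N ->
    forall p : R, c * ln (n%:R) / n%:R <= p -> p <= 1 ->
      1 - (3 / 2) / n%:R <= Rnp n p.
Proof.
pose B := expR (4 / (c - 2)) + 4 * c / (c - 2).
have c2 : 0 < c - 2 by lra.
have hB4 : 4 * c / (c - 2) > 0 by apply: divr_gt0; lra.
have B0 : 0 <= B by have := expR_ge0 (4 / (c - 2)); rewrite /B; lra.
exists (Num.bound B) => n Nn p hp hp1.
have Bn : B < n%:R.
  apply: lt_le_trans (archi_boundP B0) _; by rewrite ler_nat.
have nR : 0 < (n%:R : R) by have := expR_ge0 (4 / (c - 2)); rewrite /B in Bn; lra.
have n0 : (0 < n)%N by rewrite -(ltr0n R).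
have hn4 : 4 * c <= n%:R * (c - 2).
  rewrite -ler_pdivrMr //; have := expR_ge0 (4 / (c - 2)); rewrite /B in Bn; lra.
set L := ln (n%:R : R).
have hL : 4 / (c - 2) <= L.
  rewrite -[X in X <= _]expRK /L ler_ln ?posrE ?expR_gt0 //.
  have := expR_ge0 (4 / (c - 2)); rewrite /B in Bn; lra.
have sL : 1 <= (c - 2) / 4 * L.
  have e : (c - 2) / 4 * (4 / (c - 2)) = 1 by field; lra.
  rewrite -[X in X <= _]e; apply: ler_wpM2l => //; apply: divr_ge0; lra.
set y := expR (- ((c - 2) / 4 * L)).
have y0 : 0 <= y by exact: expR_ge0.
have y2 : y * 2 <= 1.
  apply: le_trans (_ : y * expR 1 <= _).
    apply: ler_wpM2l => //; have := expR_ge1Dx (1 : R); lra.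
  rewrite -expRD -[X in _ <= X](expR0 R) ler_expR; lra.
set A := expR (L * (1 - c * (n%:R - 1) / n%:R)).
have A0 : 0 <= A by exact: expR_ge0.
have AN : A * n%:R <= y ^+ 2.
  rewrite -[X in _ * X <= _](lnK (x := n%:R)) ?posrE // -expRD -expRM_natl ler_expR.
  rewrite -subr_ge0.
  have -> : 2%:R * - ((c - 2) / 4 * L) - (L * (1 - c * (n%:R - 1) / n%:R) + L)
          = L * (n%:R * (c - 2) - 2 * c) / (2 * n%:R) by field; lra.
  apply: divr_ge0; last lra.
  apply: mulr_ge0; last lra.
  by apply: ln_ge0; rewrite ler1n.
have main : 1 - Rnp n p <= A * 6.
  have p0 : 0 <= p.
    apply: le_trans hp; apply: divr_ge0; last lra.
    apply: mulr_ge0; first lra; by apply: ln_ge0; rewrite ler1n.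
  apply: le_trans (failure_bound n p0 hp1) _.
  rewrite sum_by_card.
  apply: le_trans (_ : \sum_(k < n.+1) A * (y ^+ k.-1 + y ^+ (n.-1 - k)) <= _).
    rewrite big_mkcond /=; apply: ler_sum => k _.
    case: ifP => [/andP [k0 kn] | _].
      exact: K_term hc n0 hn4 k0 kn hp hp1.
    by apply: mulr_ge0 => //; apply: addr_ge0; apply: exprn_ge0.
  rewrite -mulr_sumr big_split /=.
  have e : \sum_(k < n.+1) y ^+ (n.-1 - k) = \sum_(k < n.+1) y ^+ k.-1.
    rewrite (reindex_inj rev_ord_inj) /=; apply: eq_bigr => k _.
    by rewrite subSS predsub.
  rewrite e; apply: ler_wpM2l => //.
  have := geo_le3 n y0 y2; lra.
have fin : A * 6 <= 3 / 2 / n%:R.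
  rewrite ler_pdivlMr //.
  have : y ^+ 2 <= 1 / 4.
    rewrite expr2; apply: le_trans (_ : y * (1 / 2) <= _).
      apply: ler_wpM2l => //; lra.
    lra.
  have -> : A * 6 * n%:R = 6 * (A * n%:R) by ring.
  lra.
lra.
Qed.
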